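(* Let $n\le m$ and $0<\rho<n$. Every $(n,k)$ linear code over $\mathrm{GF}(q^m)$ with rank covering radius $\rho$ satisfies $$\left\lfloor n-\rho-\frac{\rho(n-\rho)+\sigma(q)}{m}\right\rfloor+1\le k\le n-\rho.$$
   Context: The rank $\mathrm{rk}(\mathbf x)$ of $\mathbf x\in\mathrm{GF}(q^m)^n$ is the maximum number of its coordinates linearly independent over $\mathrm{GF}(q)$, and $d_{\mathrm R}(\mathbf x,\mathbf y)=\mathrm{rk}(\mathbf x-\mathbf y)$. The rank covering radius of a code $C$ is $\max_{\mathbf x}\min_{\mathbf c\in C}d_{\mathrm R}(\mathbf x,\mathbf c)$. An $(n,k)$ linear code is a $k$-dimensional $\mathrm{GF}(q^m)$-subspace of $\mathrm{GF}(q^m)^n$. $\sigma(q)=\frac{1}{\ln q}\sum_{k=1}^\infty\frac{1}{k(q^k-1)}$. *)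

(* Defs.v *)
From HB Require Import structures.
From mathcomp Require Import all_boot all_order all_algebra all_field.
From mathcomp Require Import all_classical all_reals all_analysis.
Set Implicit Arguments. Unset Strict Implicit. Unset Printing Implicit Defensive.
Import Order.TTheory GRing.Theory Num.Theory.
Local Open Scope ring_scope.

(* GF(q) = F (a finite field with q = #|F| elements), GF(q^m) = L a field
   extension of F of dimension m = \dim {:L} over F. *)

Definition rk (F : finFieldType) (L : fieldExtType F) (n : nat)
    (x : 'rV[L]_n) : nat :=
  \max_(S : {set 'I_n} | free [seq x ord0 i | i in S]) #|S|.

Definition rank_dist (F : finFieldType) (L : fieldExtType F) (n : nat)
    (x y : 'rV[L]_n) : nat := rk (x - y).

(* The rank covering radius of C equals rho, i.e.
   max_x min_{c in C} d_R(x, c) = rho, written out. *)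
Definition rank_covering_radius_is (F : finFieldType) (L : fieldExtType F)
    (n : nat) (C : {vspace 'rV[L]_n}) (rho : nat) : Prop :=
  (forall x : 'rV[L]_n, exists2 c, c \in C & (rank_dist x c <= rho)%N) /\
  (exists x : 'rV[L]_n, forall c, c \in C -> (rho <= rank_dist x c)%N).

Definition sigma (R : realType) (q : nat) : R :=
  (ln (q%:R : R))^-1 * limn (fun N : nat => \sum_(1 <= k < N) (k%:R * ((q%:R : R) ^+ k - 1))^-1).

(* Main.v *)
Require Import Defs.
From HB Require Import structures.
From mathcomp Require Import all_boot all_order all_algebra all_field.
From mathcomp Require Import all_classical all_reals all_analysis.
From mathcomp Require Import zify ring lra.
Import Order.TTheory GRing.Theory Num.Theory.
Local Open Scope ring_scope.
Set Implicit Arguments. Unset Strict Implicit. Unset Printing Implicit Defensive.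

Lemma rk_dim (F : finFieldType) (L : fieldExtType F) (n : nat) (x : 'rV[L]_n) :
  (\dim <<[seq x ord0 i | i <- enum 'I_n]>> <= rk x)%N.
Proof.
rewrite /rk.
have ne : (0 < #|(fun S : {set 'I_n} => free [seq x ord0 i | i in S])|)%N.
  apply/card_gt0P; exists finset.set0; rewrite unfold_in /=.
  have -> : [seq x ord0 i | i in (finset.set0 : {set 'I_n})] = [::] by apply/eqP; rewrite -size_eq0 size_map -cardE cards0.
  exact: nil_free.
have [S freeS eqS] := eq_bigmax_cond (fun S : {set 'I_n} => #|S|) ne.
rewrite eqS.
have sub : {subset [seq x ord0 i | i <- enum 'I_n] <= <<[seq x ord0 i | i in S]>>%VS}.
  move=> _ /mapP [i _ ->].
  apply/negPn/negP => Hni.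
  have iS : i \notin S.
    apply/negP => iS; move/negP: Hni; apply; apply: memv_span; apply/mapP; exists i => //.
    by rewrite mem_enum.
  have fr : free [seq x ord0 j | j in i |: S].
    have pe : perm_eq [seq x ord0 j | j in i |: S] (x ord0 i :: [seq x ord0 j | j in S]).
      rewrite -map_cons; apply: perm_map.
      apply: uniq_perm; first exact: enum_uniq.
        by rewrite /= mem_enum iS enum_uniq.
      by move=> j; rewrite in_cons !mem_enum !inE.
    rewrite (perm_free pe) free_cons Hni.
    by move: freeS; rewrite unfold_in.
  have := @leq_bigmax_cond _ (fun S : {set 'I_n} => free [seq x ord0 i | i in S]) (fun S : {set 'I_n} => #|S|) _ fr.
  by rewrite eqS cardsU1 iS ltnn.
have sb : (<<[seq x ord0 i | i <- enum 'I_n]>> <= <<[seq x ord0 i | i in S]>>)%VS by apply/span_subvP.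
have := dimvS sb.
move/leq_trans; apply.
apply: leq_trans (dim_span _) _.
by rewrite size_map -cardE.
Qed.

Lemma rk_support (F : finFieldType) (L : fieldExtType F) (n : nat) (x : 'rV[L]_n)
  (Z : {set 'I_n}) : (forall j, j \notin Z -> x ord0 j = 0) -> (rk x <= #|Z|)%N.
Proof.
move=> HZ; apply/bigmax_leqP => S frS; apply: subset_leq_card.
apply/fintype.subsetP => j jS; apply/negPn/negP => jZ.
have jin : x ord0 j \in [seq x ord0 i | i in S] by apply/mapP; exists j; rewrite ?mem_enum.
by have := free_not0 frS jin; rewrite HZ ?eqxx.
Qed.

Lemma dim_rV (L : fieldType) n : \dim (fullv : {vspace 'rV[L]_n}) = n.
Proof. by rewrite dimvf /dim /= mul1n. Qed.

Lemma info_set (L : fieldType) (n : nat) (V : {vspace 'rV[L]_n}) :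
  exists Z : {set 'I_n}, (#|Z| <= n - \dim V)%N /\
    forall x, exists2 c, c \in V & forall j, j \notin Z -> (x - c) ord0 j = 0.
Proof.
suff H : forall d (V : {vspace 'rV[L]_n}), (n - \dim V <= d)%N -> exists Z : {set 'I_n}, (#|Z| <= n - \dim V)%N /\
    forall x, exists2 c, c \in V & forall j, j \notin Z -> (x - c) ord0 j = 0.
  exact: (H _ V (leqnn _)).
elim=> [|d IH] {}V Hd.
- have eV : V = fullv.
    apply/eqP; rewrite eqEdim subvf dim_rV.
    by rewrite -subn_eq0 -leqn0.
  exists finset.set0; split; first by rewrite cards0.
  by move=> x; exists x; rewrite ?eV ?memvf // => j _; rewrite !mxE subrr.
- case: (boolP [forall i : 'I_n, 'e_i \in V]) => [/forallP Hall | ].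
    have eV : V = fullv.
      apply/vspaceP => x; rewrite memvf (row_sum_delta x).
      by apply: rpred_sum => j _; apply: rpredZ; apply: Hall.
    exists finset.set0; split; first by rewrite cards0.
    by move=> x; exists x; rewrite ?eV ?memvf // => j _; rewrite !mxE subrr.
  rewrite negb_forall => /existsP [i Hi].
  set V' := (V + <[('e_i : 'rV[L]_n)]>)%VS.
  have sVV' : (V <= V')%VS by exact: addvSl.
  have ltd : (\dim V < \dim V')%N.
    rewrite ltnNge; apply/negP => le.
    have /eqP eVV : V == V' by rewrite eqEdim sVV' le.
    move/negP: Hi; apply; rewrite eVV.
    exact: (subvP (addvSr V _) _ (memv_line _)).
  have leV' : (\dim V' <= n)%N by rewrite -[X in (_ <= X)%N](dim_rV L n); apply: dimvS; exact: subvf.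
  have hd' : (n - \dim V' <= d)%N by lia.
  have [Z [cZ HZ]] := IH V' hd'.
  exists (i |: Z); split.
    by rewrite cardsU1; have := leq_b1 (i \notin Z); lia.
  move=> x; have [c' c'V' Hc'] := HZ x.
  have [c cV [y /vlineP [a ->] ec']] := memv_addP c'V'.
  exists c => // j; rewrite in_setU1 negb_or => /andP [ji jZ].
  have := Hc' j jZ; rewrite ec' !mxE eq_sym (negbTE ji) /= mulr0 addr0.
  by [].
Qed.

Fixpoint G (q n r : nat) : nat :=
  match n, r with
  | 0, 0 => 1
  | 0, _.+1 => 0
  | n'.+1, 0 => 1
  | n'.+1, r'.+1 => q ^ r'.+1 * G q n' r'.+1 + G q n' r'
  end%N.

Lemma G_gt q n r : (n < r)%N -> G q n r = 0%N.
Proof.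
elim: n r => [|n IH] [|r] //= lt.
by rewrite !IH ?muln0 // ltnW.
Qed.

Lemma G_r0 q n : G q n 0 = 1%N.
Proof. by case: n. Qed.

Lemma G_nn q n : G q n n = 1%N.
Proof. by elim: n => //= n ->; rewrite G_gt ?muln0. Qed.

Section Count.
Variables (F : finFieldType) (vT : vectType F).
Local Notation W := (finvect_type vT).

Lemma card_W : #|W| = (#|F| ^ dim vT)%N.
Proof.
rewrite -(card_vspacef (Vector.class W)).
by rewrite card_vspace dimvf.
Qed.

Lemma card_span (t : seq W) : #|[set w : W | w \in <<t>>%VS]| = (#|F| ^ \dim <<t>>)%N.
Proof.
rewrite -card_vspace; apply: eq_card => w; by rewrite inE.
Qed.


Definition cnt n r := #|[set t : n.-tuple W | (\dim <<(t : seq W)>>%VS <= r)%N]|.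

Lemma inner_bound n r (t : n.-tuple W) :
  (#|[set w : W | (\dim <<(w :: (t : seq W))>>%VS <= r)%N]| <=
   (\dim <<(t : seq W)>>%VS < r)%N * (#|F| ^ dim vT) + (\dim <<(t : seq W)>>%VS <= r)%N * (#|F| ^ r))%N.
Proof.
have sub w : (<<(t : seq W)>> <= <<(w :: (t : seq W))>>)%VS by rewrite span_cons addvSr.
case: (ltngtP (\dim <<(t : seq W)>>%VS) r) => [ltdr | gtdr | edr].
- rewrite !mul1n -card_W.
  apply: leq_trans (leq_addr (#|F| ^ r) _); exact: max_card.
- rewrite /= !mul0n add0n leqn0 cards_eq0.
  apply/eqP/setP => w; rewrite !inE; apply/negbTE; rewrite -ltnNge.
  exact: leq_trans gtdr (dimvS (sub w)).
- rewrite mul0n mul1n add0n -edr -card_span.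
  apply: subset_leq_card; apply/fintype.subsetP => w; rewrite !inE => Hw.
  have /eqP e : <<(t : seq W)>>%VS == <<(w :: (t : seq W))>>%VS.
    rewrite eqEdim (sub w) /=; exact: Hw.
  by rewrite e; apply: memv_span; rewrite in_cons eqxx.
Qed.


Definition tcons n (p : W * n.-tuple W) : n.+1.-tuple W := [tuple of p.1 :: p.2].

Lemma cnt_cons n r : (cnt n.+1 r <= \sum_(t : n.-tuple W)
   ((\dim <<(t : seq W)>>%VS < r)%N * (#|F| ^ dim vT) + (\dim <<(t : seq W)>>%VS <= r)%N * (#|F| ^ r)))%N.
Proof.
rewrite /cnt -sum1dep_card.
rewrite (reindex (@tcons n)) /=; last first.
  exists (fun t : n.+1.-tuple W => (thead t, [tuple of behead t])) => [[w t] _ | t _].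
    by congr pair; apply: val_inj.
  by apply: val_inj; rewrite /= [in RHS](tuple_eta t).
rewrite big_mkcond /=.
rewrite -(pair_big xpredT xpredT (fun (w : W) (t : n.-tuple W) => if (\dim <<(w :: (t : seq W))>>%VS <= r)%N then 1 else 0)%N) /=.
rewrite exchange_big /=.
apply: leq_sum => t _.
rewrite -big_mkcond /= sum1dep_card.
exact: inner_bound.
Qed.


Lemma sum_bool_card (T : finType) (P : pred T) : (\sum_(t : T) (P t : nat))%N = #|[set t | P t]|.
Proof. rewrite -sum1dep_card [RHS]big_mkcond; apply: eq_bigr => t _; by case: (P t). Qed.

Lemma cnt_le_all n r : (cnt n r <= (#|F| ^ dim vT) ^ n)%N.
Proof. by rewrite /cnt -card_W -card_tuple; exact: max_card. Qed.

Lemma cnt_bound n r : (r <= n)%N -> (cnt n r <= (#|F| ^ (dim vT * r)) * G #|F| n r)%N.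
Proof.
elim: n r => [|n IH] r.
  rewrite leqn0 => /eqP ->; rewrite /= muln0 expn0 mul1n.
  by apply: leq_trans (cnt_le_all 0 0) _.
move=> lern; case: (ltngtP r n.+1) => [ltrn | gtrn | ern]; last first.
- rewrite ern G_nn muln1 expnM; exact: cnt_le_all.
- by rewrite ltnNge lern in gtrn.
apply: leq_trans (cnt_cons n r) _.
rewrite big_split /= -!big_distrl /= !sum_bool_card.
case: r lern ltrn => [|r] lern ltrn.
  rewrite /= muln0 expn0 !mul1n muln1.
  have -> : #|[set t : n.-tuple W | (\dim <<(t : seq W)>>%VS < 0)%N]| = 0%N.
    by apply/eqP; rewrite cards_eq0; apply/eqP/setP => t; rewrite !inE.
  rewrite mul0n add0n; have := IH 0%N (leq0n _).
  by rewrite /= muln0 expn0 mul1n G_r0.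
have IH1 := IH r (ltnW ltrn).
have IH2 := IH r.+1 ltrn.
rewrite /cnt in IH1 IH2.
have -> : [set t : n.-tuple W | (\dim <<(t : seq W)>>%VS < r.+1)%N] = [set t : n.-tuple W | (\dim <<(t : seq W)>>%VS <= r)%N].
  by apply/setP => t; rewrite !inE ltnS.
move: IH1 IH2.
set a := #|[set t : n.-tuple W | (\dim <<(t : seq W)>>%VS <= r)%N]|.
set b := #|[set t : n.-tuple W | (\dim <<(t : seq W)>>%VS <= r.+1)%N]|.
rewrite /=.
have e1 : (#|F| ^ (dim vT * r.+1) = #|F| ^ (dim vT * r) * #|F| ^ dim vT)%N by rewrite mulnS expnD mulnC.
rewrite e1.
set A := (#|F| ^ (dim vT * r))%N. set B := (#|F| ^ dim vT)%N. set Q := (#|F| ^ r.+1)%N.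
set g1 := G _ n r. set g2 := G _ n r.+1.
move=> H1 H2.
rewrite mulnDr [X in (_ <= X)%N]addnC.
apply: leq_add.
  by rewrite -mulnA (mulnC B) mulnA leq_mul2r H1 orbT.
by rewrite (mulnC Q) mulnA leq_mul2r H2 orbT.
Qed.

End Count.

Section Gbound.
Variable R : realFieldType.

Definition psi (qr a b : R) (s : nat) : R :=
  match s with 0 => 1 | 1 => qr / (qr - 1) | _ => a - b / qr ^+ s end.

Lemma psi_step (qr a b : R) s : 2 <= qr -> 0 <= b -> a <= b * (qr - 1) ->
  qr / (qr - 1) <= (a - b / qr ^+ 2) * (1 - 1 / qr ^+ 2) ->
  psi qr a b s + psi qr a b s.+1 / qr ^+ s.+1 <= psi qr a b s.+1.
Proof.
move=> q2 Hb H1 H2.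
have qn0 : qr != 0 by apply/eqP => e; lra.
have q1n0 : qr - 1 != 0 by apply/eqP => e; lra.
case: s => [|[|s]] /=.
- have -> : qr / (qr - 1) / qr ^+ 1 = (qr - 1)^-1 by rewrite expr1; field; rewrite ?qn0 ?q1n0.
  have -> : qr / (qr - 1) = 1 + (qr - 1)^-1 by field; rewrite ?qn0 ?q1n0.
  lra.
- lra.
- set Q := qr ^+ s.+3.
  have Qn0 : Q != 0 by rewrite expf_neq0.
  have u0 : 0 <= Q^-1 by rewrite invr_ge0 exprn_ge0 //; lra.
  have eQ : Q = qr * qr ^+ s.+2 by rewrite /Q exprS.
  have Pn0 : qr ^+ s.+2 != 0 by rewrite expf_neq0.
  have -> : b / qr ^+ s.+2 = b * qr * Q^-1 by rewrite eQ; field; rewrite ?qn0 ?Pn0.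
  have h1 : 0 <= (b * (qr - 1) - a) * Q^-1 by apply: mulr_ge0 => //; lra.
  have h2 : 0 <= b * (Q^-1 * Q^-1) by apply: mulr_ge0 => //; apply: mulr_ge0.
  lra.
Qed.


Lemma psi_ge1 (qr a b : R) s : 2 <= qr -> 0 <= b -> 1 <= a - b / qr ^+ 2 -> 1 <= psi qr a b s.
Proof.
move=> q2 Hb H4.
have qn0 : qr != 0 by apply/eqP => e; lra.
have q1n0 : qr - 1 != 0 by apply/eqP => e; lra.
case: s => [|[|s]] /=.
- lra.
- have -> : qr / (qr - 1) = 1 + (qr - 1)^-1 by field; rewrite ?qn0 ?q1n0.
  have : 0 <= (qr - 1)^-1 by rewrite invr_ge0; lra.
  lra.
- suff : b / qr ^+ s.+2 <= b / qr ^+ 2 by lra.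
  apply: ler_wpM2l => //.
  rewrite lef_pV2 ?posrE ?exprn_gt0 //; try lra.
  by rewrite -(subnKC (isT : (2 <= s.+2)%N)) exprD ler_peMr ?exprn_ge0 ?exprn_ege1 //; lra.
Qed.

Lemma psi_lea (qr a b : R) s : 2 <= qr -> 0 <= b -> qr / (qr - 1) <= a -> psi qr a b s <= a.
Proof.
move=> q2 Hb H3.
have qn0 : qr != 0 by apply/eqP => e; lra.
have q1n0 : qr - 1 != 0 by apply/eqP => e; lra.
case: s => [|[|s]] //=.
- have e : qr / (qr - 1) = 1 + (qr - 1)^-1 by field; rewrite ?qn0 ?q1n0.
  rewrite e in H3.
  have : 0 <= (qr - 1)^-1 by rewrite invr_ge0; lra.
  lra.
- have : 0 <= b / qr ^+ s.+2 by apply: divr_ge0 => //; apply: exprn_ge0; lra.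
  lra.
Qed.

Lemma G_inv (q : nat) (a b : R) n r : (2 <= q)%N -> 0 <= b -> a <= b * (q%:R - 1) ->
  q%:R / (q%:R - 1) <= (a - b / q%:R ^+ 2) * (1 - 1 / q%:R ^+ 2) ->
  1 <= a - b / q%:R ^+ 2 ->
  (r <= n)%N -> (G q n r)%:R <= q%:R ^+ (r * (n - r)) * psi q%:R a b (n - r).
Proof.
move=> q2 Hb H1 H2 H4.
have q2r : (2 : R) <= q%:R by rewrite (ler_nat R 2 q).
have qpos : (0 : R) < q%:R by lra.
elim: n r => [|n IH] r.
  by rewrite leqn0 => /eqP ->; rewrite /= mul1r.
case: r => [|r] lern.
  by rewrite G_r0 mul0n expr0 mul1r subn0; apply: psi_ge1.
case: (ltngtP r n) => [ltrn | gtrn | ern]; last first.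
- by rewrite ern G_nn subnn muln0 expr0 mul1r.
- by rewrite ltnNge -ltnS lern in gtrn.
rewrite /= natrD natrM natrX.
have IH1 := IH r.+1 ltrn.
have IH2 := IH r (ltnW ltrn).
have es : (n - r = (n - r.+1).+1)%N by rewrite subnSK.
rewrite subSS es.
rewrite es in IH2.
set s := (n - r.+1)%N in IH1 IH2 *.
set P := q%:R ^+ (r.+1 * s.+1) : R.
have eP1 : (q%:R ^+ r.+1 * q%:R ^+ (r.+1 * s) = P :> R) by rewrite /P -exprD mulnS.
have eP2 : (q%:R ^+ (r * s.+1) = P / q%:R ^+ s.+1 :> R).
  rewrite /P mulSn exprD mulrAC divff ?mul1r //.
  by rewrite expf_neq0 // gt_eqF.
have Ppos : 0 <= P by rewrite exprn_ge0 // ltW.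
have st := psi_step s (q2r) Hb H1 H2.
apply: le_trans (_ : q%:R ^+ r.+1 * (q%:R ^+ (r.+1 * s) * psi q%:R a b s) + q%:R ^+ (r * s.+1) * psi q%:R a b s.+1 <= _).
  apply: lerD => //.
  by apply: ler_wpM2l => //; rewrite exprn_ge0 // ltW.
rewrite mulrA eP1 eP2.
have -> : P / q%:R ^+ s.+1 * psi q%:R a b s.+1 = P * (psi q%:R a b s.+1 / q%:R ^+ s.+1) by rewrite mulrAC mulrA.
rewrite -mulrDr.
by apply: ler_wpM2l.
Qed.


Lemma G_le_a (q : nat) (a b : R) n r : (2 <= q)%N -> 0 <= b -> a <= b * (q%:R - 1) ->
  q%:R / (q%:R - 1) <= (a - b / q%:R ^+ 2) * (1 - 1 / q%:R ^+ 2) ->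
  1 <= a - b / q%:R ^+ 2 -> q%:R / (q%:R - 1) <= a ->
  (r <= n)%N -> (G q n r)%:R <= q%:R ^+ (r * (n - r)) * a.
Proof.
move=> q2 Hb H1 H2 H4 H3 lern.
have q2r : (2 : R) <= q%:R by rewrite (ler_nat R 2 q).
apply: le_trans (G_inv q2 Hb H1 H2 H4 lern) _.
apply: ler_wpM2l; first by rewrite exprn_ge0 //; lra.
exact: psi_lea.
Qed.

Lemma G_lt (q : nat) n r : (2 <= q)%N -> (r <= n)%N ->
  (G q n r < q ^ (r * (n - r) + (if q == 2 then 2 else 1)))%N.
Proof.
move=> q2 lern.
rewrite -(ltr_nat R) natrX exprD.
have q2r : (2 : R) <= q%:R by rewrite (ler_nat R 2 q).
have qpos : (0 : R) < q%:R by lra.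
have Epos : (0 : R) < q%:R ^+ (r * (n - r)) by rewrite exprn_gt0.
have qn0 : (q%:R : R) != 0 by rewrite gt_eqF.
have q1n0 : (q%:R : R) - 1 != 0 by apply/eqP => e; lra.
case: eqP => [q2e | qn2].
- subst q.
  have e2 : (2%:R : R) - 1 = 1 by lra.
  have e4 : (2%:R : R) ^+ 2 = 4 by rewrite expr2; lra.
  have := @G_le_a 2 (18/5) (18/5) n r q2.
  rewrite e2 divr1 e4.
  move=> H; apply: le_lt_trans (H _ _ _ _ _ lern) _; try lra.
- have q3 : (3 <= q)%N by lia.
  have q3r : (3 : R) <= q%:R by rewrite (ler_nat R 3 q).
  have := @G_le_a q 2 1 n r q2.
  move=> H; apply: le_lt_trans (H _ _ _ _ _ lern) _; rewrite ?expr1; try lra.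
  + set x : R := q%:R in q3r q1n0 qn0 *.
    have x2 : 0 < x ^+ 2 by rewrite exprn_gt0 //; lra.
    have hv : 1 / x ^+ 2 <= 1 / 9.
      rewrite ler_pdivrMr // mulrC mulrA mulr1 -ler_pdivrMr ?div1r ?invrK; last lra.
      rewrite expr2; nra.
    have hv0 : 0 <= 1 / x ^+ 2 by rewrite divr_ge0 // ltW.
    have hu : 1 / (x - 1) <= 1 / 2.
      rewrite ler_pdivrMr; last lra.
      rewrite mulrC mulrA mulr1 -ler_pdivrMr ?div1r ?invrK; lra.
    have -> : x / (x - 1) = 1 + 1 / (x - 1) by field; rewrite q1n0.
    have hvv : 0 <= (1 / x ^+ 2) * (1 / x ^+ 2) by apply: mulr_ge0.
    nra.
  + have : 1 / (q%:R : R) ^+ 2 <= 1.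
      rewrite ler_pdivrMr ?exprn_gt0 // mul1r expr2; nra.
    lra.
  + rewrite ler_pdivrMr; lra.
  + rewrite ltr_pM2l //; lra.
Qed.

End Gbound.

Section Sig.
Variable R : realType.

Lemma term_ge0 (q k : nat) : (2 <= q)%N -> (1 <= k)%N -> 0 <= (k%:R * ((q%:R : R) ^+ k - 1))^-1.
Proof.
move=> q2 k1; rewrite invr_ge0 mulr_ge0 // subr_ge0 exprn_ege1 //.
by rewrite (ler_nat R 1 q) ltnW.
Qed.

Lemma term_le (q k : nat) : (2 <= q)%N -> (1 <= k)%N ->
  (k%:R * ((q%:R : R) ^+ k - 1))^-1 <= 2 / k%:R - 2 / k.+1%:R.
Proof.
move=> q2 k1.
have hk : (k < q ^ k)%N by apply: ltn_expl.
have hkR : (k%:R + 1 : R) <= (q%:R : R) ^+ k.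
  by rewrite -natrX natr1 ler_nat.
have k1R : (1 : R) <= k%:R by rewrite (ler_nat R 1 k).
set x : R := k%:R in hkR k1R *.
set y : R := (q%:R : R) ^+ k in hkR *.
have -> : k.+1%:R = x + 1 :> R by rewrite /x natr1.
have xn0 : x != 0 by apply/eqP => e; lra.
have x1n0 : x + 1 != 0 by apply/eqP => e; lra.
have -> : 2 / x - 2 / (x + 1) = (x * (x + 1) / 2)^-1.
  by field; rewrite xn0 x1n0 /=.
rewrite lef_pV2 ?posrE; first by nra.
  by apply: mulr_gt0; nra.
by apply: divr_gt0; nra.
Qed.

Lemma partial_le (q : nat) N : (2 <= q)%N ->
  \sum_(1 <= k < N.+1) (k%:R * ((q%:R : R) ^+ k - 1))^-1 <= 2 - 2 / N.+1%:R.
Proof.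
move=> q2; elim: N => [|N IH].
  by rewrite big_geq // divr1; lra.
rewrite big_nat_recr //=.
have := @term_le q N.+1 q2 (isT : (1 <= N.+1)%N).
move: IH; set s := \sum_(_ <= _ < _) _; set t := (_ * _)^-1; set a := 2 / _; set b := 2 / _; lra.
Qed.

Lemma sigma_lb (q : nat) : (2 <= q)%N -> ((q%:R - 1) * ln (q%:R : R))^-1 <= sigma R q.
Proof.
move=> q2.
set u := (fun N : nat => \sum_(1 <= k < N) (k%:R * ((q%:R : R) ^+ k - 1))^-1).
have hom : {homo u : n m / (n <= m)%N >-> n <= m}.
  move=> n m nm; rewrite /u.
  case: (leqP n 1) => n1.
    rewrite big_geq // big_nat_cond; apply: sumr_ge0 => k /andP [/andP [k1 _] _]; exact: term_ge0.
  rewrite (@big_cat_nat _ _ _ n 1 m _ _ (ltnW n1) nm) /= lerDl big_nat_cond.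
  apply: sumr_ge0 => k /andP [/andP [k1 _] _]; apply: term_ge0 => //; lia.
have cv : cvgn u.
  apply: nondecreasing_is_cvgn => //.
  exists 2 => _ [N _ <-].
  case: N => [|N]; first by rewrite /u big_geq //; lra.
  apply: le_trans (@partial_le q N q2) _.
  by rewrite gerBl divr_ge0.
have h2 := nondecreasing_cvgn_le hom cv 2.
have e2 : u 2 = ((q%:R - 1))^-1.
  by rewrite /u big_nat1 mul1r expr1.
have lnq : 0 < ln (q%:R : R).
  apply: ln_gt0; rewrite (ltr_nat R 1 q); done.
rewrite /sigma -/u invfM mulrC.
apply: ler_wpM2l; first by rewrite invr_ge0 ltW.
by rewrite -e2.
Qed.

Lemma ln2_lt1 : ln (2 : R) < 1.
Proof.
have h : (2 : R) < expR 1 by have := @expR_gt1Dx R 1 (oner_neq0 _); lra.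
rewrite -[X in _ < X](expRK (1 : R)).
by rewrite ltr_ln // posrE ?expR_gt0.
Qed.

End Sig.


Lemma cover_count (F : finFieldType) (L : fieldExtType F) (n rho : nat) (C : {vspace 'rV[L]_n}) :
  (forall x : 'rV[L]_n, exists2 c, c \in C & (rank_dist x c <= rho)%N) ->
  ((#|F| ^ \dim {:L}) ^ n <= (#|F| ^ \dim {:L}) ^ (\dim C) * cnt L n rho)%N.
Proof.
move=> Hcov.
pose W := finvect_type L.
pose k := \dim C.
pose b := vbasis C.
pose f (p : k.-tuple W * n.-tuple W) : n.-tuple W :=
  [tuple ((\sum_(i < k) (tnth p.1 i : L) *: tnth b i) + \row_j (tnth p.2 j : L)) ord0 j | j < n].
pose Ball := [set t : n.-tuple W | (\dim <<(t : seq W)>>%VS <= rho)%N].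
have sub : [set: n.-tuple W] \subset f @: (finset.setX [set: k.-tuple W] Ball).
  apply/fintype.subsetP => y _.
  pose x : 'rV[L]_n := \row_j (tnth y j : L).
  have [c cC hc] := Hcov x.
  apply/imsetP; exists ([tuple (coord b i c : W) | i < k], [tuple ((x - c) ord0 j : W) | j < n]).
    rewrite !inE /=.
    exact: leq_trans (rk_dim (x - c)) hc.
  have e1 : \sum_(i < k) (tnth [tuple (coord b i c : W) | i < k] i : L) *: tnth b i = c.
    rewrite [RHS](coord_vbasis cC); apply: eq_bigr => i _.
    by rewrite tnth_mktuple (tnth_nth 0).
  have e2 : \row_j (tnth [tuple ((x - c) ord0 j : W) | j < n] j : L) = x - c.
    by apply/rowP => j; rewrite mxE tnth_mktuple.
  apply: eq_from_tnth => j; rewrite /f /= e1 e2 tnth_mktuple addrC subrK.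
  by rewrite /x mxE.
have := leq_trans (subset_leq_card sub) (leq_imset_card _ _).
rewrite cardsX !cardsT !card_tuple card_W dimvf.
by [].
Qed.

Theorem proposition13 (R : realType) (F : finFieldType) (L : fieldExtType F)
    (n rho : nat) (C : {vspace 'rV[L]_n}) :
  (n <= \dim {: L})%N -> (0 < rho)%N -> (rho < n)%N ->
  rank_covering_radius_is C rho ->
  let q := #|F| in let m := \dim {: L} in let k := \dim C in
  (Num.floor ((n%:R : R) - rho%:R
      - (rho%:R * (n%:R - rho%:R) + sigma R q) / m%:R) + 1 <= k%:Z)
  /\ (k <= n - rho)%N.
Proof.
move=> hn hr0 hrn [Hcov Hfar] q m k.
have kup : (k <= n - rho)%N.
  have [Z [cZ HZ]] := info_set C.
  have [x0 Hx0] := Hfar.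
  have [c cC hc] := HZ x0.
  have := Hx0 c cC.
  rewrite /rank_dist => h.
  have := leq_trans h (rk_support hc).
  move=> h2; have := leq_trans h2 cZ.
  rewrite -/k; lia.
split => //.
have q2 : (2 <= q)%N by exact: finNzRing_gt1.
have hcov := cover_count Hcov.
have hb := @cnt_bound F L n rho (ltnW hrn).
have hg := @G_lt R q n rho q2 (ltnW hrn).

have key : (m * n < m * k + m * rho + rho * (n - rho) + (if q == 2 then 2 else 1))%N.
  rewrite -(ltn_exp2l _ _ q2).
  apply: leq_ltn_trans (_ : (q ^ (m * n) <= q ^ (m * k) * (q ^ (m * rho) * G q n rho))%N) _.
    rewrite !expnM; apply: leq_trans hcov _.
    rewrite leq_mul2l; apply/orP; right.
    by rewrite -expnM /m dimvf.
  rewrite -!addnA [X in (_ < X)%N]expnD [X in (_ < _ * X)%N]expnD.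
  rewrite ltn_mul2l expn_gt0 ltnW //=.
  rewrite ltn_mul2l expn_gt0 ltnW //=.
set d := (if q == 2 then 2 else 1)%N in key.
have mpos : (0 < m)%N by lia.
have kn : (k + rho <= n)%N by lia.
have key2 : (m * (n - rho - k) + 1 <= rho * (n - rho) + d)%N.
  have : (m * n = m * (n - rho - k) + m * k + m * rho)%N.
    by rewrite -!mulnDr; congr (_ * _); lia.
  lia.
have key3 : (m%:R * (n%:R - rho%:R - k%:R) + 1 <= rho%:R * (n%:R - rho%:R) + d%:R :> R).
  have := key2; rewrite -(ler_nat R) !natrD !natrM !natrB //; exact: ltnW hrn.
have lnq : 0 < ln (q%:R : R) by apply: ln_gt0; rewrite (ltr_nat R 1 q).
have q1 : (1 : R) <= q%:R - 1.
  by rewrite lerBrDr (ler_nat R 2 q) .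
have sig := @sigma_lb R q q2.
have sigd : d%:R - 1 < sigma R q.
  rewrite /d; case: eqP => [q2e | qn2].
  - apply: lt_le_trans sig.
    rewrite q2e in lnq *.
    have -> : (2%:R : R) - 1 = 1 by lra.
    rewrite mul1r invf_gt1 //.
    exact: ln2_lt1.
  - apply: lt_le_trans sig.
    rewrite subrr invr_gt0 mulr_gt0 //; lra.
rewrite lezD1 floor_lt_int.
have -> : ((k%:Z)%:~R : R) = k%:R by [].
have hm : (0 : R) < m%:R by rewrite ltr0n.
have h1 : (n%:R - rho%:R - k%:R) * m%:R < rho%:R * (n%:R - rho%:R) + sigma R q :> R by lra.
rewrite -ltr_pdivlMr // in h1.
lra.
Qed.
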